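(* Let $C\ge0$ and $a>0$ be real numbers, $g(\xi)=Ce^{-a|\xi|}$, and let $g_m$ be the $m$-fold normalized convolution of $g$ ($g_1=g$, $g_{m+1}=g_m*g$). Then for every integer $m\ge1$ and every $\xi\ne0$, $$g_m(\xi)=2\sqrt{aC}\left(\frac{C|\xi|}{2\pi}\right)^{m-1/2}\frac{K_{m-1/2}(a|\xi|)}{\Gamma(m)},$$ and consequently, for all $\xi\in\mathbb{R}$, $$g_m(\xi)\le C e^{-a|\xi|}\left(\frac{C}{\pi a}\right)^{m-1}\frac{\Gamma\!\left(\frac{1+a|\xi|}{2}+m-1\right)}{\Gamma(m)\,\Gamma\!\left(\frac{1+a|\xi|}{2}\right)} .$$
   Context: Convolution is normalized: $f*h(\xi)=\frac1{2\pi}\int_{\mathbb{R}}f(\eta)h(\xi-\eta)\,d\eta$. $K_\nu$ is the modified Bessel function of the second kind of order $\nu$. *)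

(* Defs.v *)
From Stdlib Require Import Reals Lra ClassicalEpsilon.
Open Scope R_scope.

Definition improper_integral_R (f : R -> R) (l : R) : Prop :=
  exists I : (forall a b : R, Riemann_integrable f a b),
    forall eps : R, 0 < eps ->
      exists M : R, forall a b : R, a <= - M -> M <= b ->
        Rabs (RiemannInt (I a b) - l) < eps.

Definition improper_integral_0_inf (f : R -> R) (l : R) : Prop :=
  exists I : (forall a b : R, 0 < a -> a <= b -> Riemann_integrable f a b),
    forall eps : R, 0 < eps ->
      exists d : R, 0 < d /\ exists M : R,
        forall (a b : R) (ha : 0 < a) (hab : a <= b), a < d -> M <= b ->
          Rabs (RiemannInt (I a b ha hab) - l) < eps.

Definition Int_R (f : R -> R) : R :=
  epsilon (inhabits 0) (improper_integral_R f).
Definition Int_0_inf (f : R -> R) : R :=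
  epsilon (inhabits 0) (improper_integral_0_inf f).

Definition conv (f h : R -> R) (xi : R) : R :=
  / (2 * PI) * Int_R (fun eta => f eta * h (xi - eta)).

(* m-fold normalized convolution: g_1 = g, g_{m+1} = g_m * g.
   (g_0 is not used; it is set to g.) *)
Fixpoint conv_pow (g : R -> R) (m : nat) : R -> R :=
  match m with
  | O => g
  | S O => g
  | S k => conv (conv_pow g k) g
  end.

Definition Gamma (x : R) : R :=
  Int_0_inf (fun t => Rpower t (x - 1) * exp (- t)).

Definition BesselK (nu x : R) : R :=
  Int_0_inf (fun t => exp (- x * cosh t) * cosh (nu * t)).

(* Main.v *)
Require Import Defs.
From Stdlib Require Import Reals Lra Lia Classical ClassicalEpsilon FunctionalExtensionality.
From Coquelicot Require Import Coquelicot.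
Open Scope R_scope.

Lemma Int_R_unique f l : improper_integral_R f l -> Int_R f = l.
Proof.
  intros Hl. unfold Int_R.
  assert (H := epsilon_spec (inhabits 0) (improper_integral_R f) (ex_intro _ l Hl)).
  set (l' := epsilon _ _) in *. clearbody l'.
  destruct (Req_dec l' l) as [|Hne]; auto. exfalso.
  destruct H as [I1 H1], Hl as [I2 H2].
  assert (He : 0 < Rabs (l' - l) / 2) by (apply Rdiv_lt_0_compat; [apply Rabs_pos_lt; lra|lra]).
  destruct (H1 _ He) as [M1 HM1]. destruct (H2 _ He) as [M2 HM2].
  set (M := Rmax (Rabs M1) (Rabs M2)).
  assert (A1 : - M <= - M1) by (unfold M; generalize (Rmax_l (Rabs M1) (Rabs M2)) (Rle_abs M1); lra).
  assert (A2 : - M <= - M2) by (unfold M; generalize (Rmax_r (Rabs M1) (Rabs M2)) (Rle_abs M2); lra).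
  assert (B1 : M1 <= M) by (unfold M; generalize (Rmax_l (Rabs M1) (Rabs M2)) (Rle_abs M1); lra).
  assert (B2 : M2 <= M) by (unfold M; generalize (Rmax_r (Rabs M1) (Rabs M2)) (Rle_abs M2); lra).
  specialize (HM1 (-M) M A1 B1). specialize (HM2 (-M) M A2 B2).
  rewrite (RiemannInt_P5 (I1 (-M) M) (I2 (-M) M)) in HM1.
  assert (Rabs (l' - l) <= Rabs (RiemannInt (I2 (- M) M) - l') + Rabs (RiemannInt (I2 (- M) M) - l)).
  { replace (l' - l) with (-(RiemannInt (I2 (- M) M) - l') + (RiemannInt (I2 (- M) M) - l)) by ring.
    eapply Rle_trans; [apply Rabs_triang|]. rewrite Rabs_Ropp. lra. }
  lra.
Qed.

Definition DL (P : R -> R -> R) (l : R) : Prop :=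
  forall eps, 0 < eps -> exists d, 0 < d /\ exists M,
    forall a b, 0 < a -> a <= b -> a < d -> M <= b -> Rabs (P a b - l) < eps.

Lemma Int_0_inf_unique f l : improper_integral_0_inf f l -> Int_0_inf f = l.
Proof.
  intros Hl. unfold Int_0_inf.
  assert (H := epsilon_spec (inhabits 0) (improper_integral_0_inf f) (ex_intro _ l Hl)).
  set (l' := epsilon _ _) in *. clearbody l'.
  destruct (Req_dec l' l) as [|Hne]; auto. exfalso.
  destruct H as [I1 H1], Hl as [I2 H2].
  assert (He : 0 < Rabs (l' - l) / 2) by (apply Rdiv_lt_0_compat; [apply Rabs_pos_lt; lra|lra]).
  destruct (H1 _ He) as [d1 [Hd1 [M1 HM1]]]. destruct (H2 _ He) as [d2 [Hd2 [M2 HM2]]].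
  set (a := Rmin d1 d2 / 2).
  assert (ha : 0 < a) by (unfold a, Rmin; destruct (Rle_dec d1 d2); lra).
  assert (ha1 : a < d1) by (unfold a; generalize (Rmin_l d1 d2); lra).
  assert (ha2 : a < d2) by (unfold a; generalize (Rmin_r d1 d2); lra).
  set (b := Rmax a (Rmax M1 M2)).
  assert (hab : a <= b) by apply Rmax_l.
  assert (hb1 : M1 <= b) by (unfold b; generalize (Rmax_r a (Rmax M1 M2)) (Rmax_l M1 M2); lra).
  assert (hb2 : M2 <= b) by (unfold b; generalize (Rmax_r a (Rmax M1 M2)) (Rmax_r M1 M2); lra).
  specialize (HM1 a b ha hab ha1 hb1). specialize (HM2 a b ha hab ha2 hb2).
  rewrite (RiemannInt_P5 (I1 a b ha hab) (I2 a b ha hab)) in HM1.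
  assert (Rabs (l' - l) <= Rabs (RiemannInt (I2 a b ha hab) - l') + Rabs (RiemannInt (I2 a b ha hab) - l)).
  { replace (l' - l) with (-(RiemannInt (I2 a b ha hab) - l') + (RiemannInt (I2 a b ha hab) - l)) by ring.
    eapply Rle_trans; [apply Rabs_triang|]. rewrite Rabs_Ropp. lra. }
  lra.
Qed.

Lemma improper_R_of_RInt f l :
  (forall a b, a <= b -> ex_RInt f a b) ->
  (forall eps, 0 < eps -> exists M, forall a b, a <= - M -> M <= b -> Rabs (RInt f a b - l) < eps) ->
  improper_integral_R f l.
Proof.
  intros Hex Hlim.
  assert (Hex' : forall a b, ex_RInt f a b).
  { intros a b. destruct (Rle_dec a b). auto. apply ex_RInt_swap. apply Hex. lra. }
  exists (fun a b => ex_RInt_Reals_0 f a b (Hex' a b)).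
  intros eps He. destruct (Hlim eps He) as [M HM]. exists M. intros a b h1 h2.
  rewrite <- RInt_Reals. auto.
Qed.

Lemma improper_0_of_RInt f l :
  (forall a b, 0 < a -> a <= b -> ex_RInt f a b) -> DL (RInt f) l ->
  improper_integral_0_inf f l.
Proof.
  intros Hex Hlim.
  exists (fun a b ha hab => ex_RInt_Reals_0 f a b (Hex a b ha hab)).
  intros eps He. destruct (Hlim eps He) as [d [Hd [M HM]]]. exists d. split; auto. exists M.
  intros a b ha hab h1 h2. rewrite <- RInt_Reals. auto.
Qed.

Lemma RInt_of_improper_0 f l : improper_integral_0_inf f l ->
  (forall a b, 0 < a -> a <= b -> ex_RInt f a b) /\ DL (RInt f) l.
Proof.
  intros [I H]. split.
  - intros a b ha hab. apply ex_RInt_Reals_1. apply I; auto.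
  - intros eps He. destruct (H eps He) as [d [Hd [M HM]]]. exists d. split; auto. exists M.
    intros a b ha hab h1 h2. rewrite (RInt_Reals _ _ _ (I a b ha hab)). auto.
Qed.

Fixpoint phi (n : nat) (x : R) : R :=
  match n with
  | O => exp (- x)
  | S k => match k with
           | O => (1 + x) * exp (- x)
           | S j => x ^ 2 * phi j x + (2 * INR j + 3) * phi k x
           end
  end.

Lemma phi_SS j x : phi (S (S j)) x = x ^ 2 * phi j x + (2 * INR j + 3) * phi (S j) x.
Proof. reflexivity. Qed.

Definition dphi (n : nat) (x : R) : R :=
  match n with O => - phi 0 x | S k => - x * phi k x end.

Lemma is_derive_exp_neg x : is_derive (fun y => exp (- y)) x (- exp (- x)).
Proof. auto_derive; auto. ring. Qed.

Lemma is_derive_eq (f : R -> R) (x l l' : R) : @eq R l l' -> is_derive f x l -> is_derive f x l'.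
Proof. intros ->; auto. Qed.

Lemma phi_derive n x : is_derive (phi n) x (dphi n x).
Proof.
  revert x.
  assert (H : forall n, (forall x, is_derive (phi n) x (dphi n x)) /\ (forall x, is_derive (phi (S n)) x (dphi (S n) x))).
  { clear n; intro n; induction n as [|n [IH1 IH2]].
    - split; intros x.
      + simpl. apply is_derive_exp_neg.
      + simpl. auto_derive; auto. ring.
    - split; auto. intros x.
      assert (E : phi (S (S n)) = fun y => y ^ 2 * phi n y + (2 * INR n + 3) * phi (S n) y).
      { reflexivity. }
      rewrite E. clear E.
      eapply is_derive_eq.
      2: { apply @is_derive_plus.
           - apply (is_derive_mult (fun y => y ^ 2) (phi n)).
             + auto_derive; auto.
             + apply IH1.
             + intros; apply Rmult_comm.
           - apply is_derive_scal. apply IH2. }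
      simpl dphi. unfold plus, mult; simpl.
      destruct n as [|n].
      + simpl. ring.
      + simpl dphi. unfold dphi. simpl phi. rewrite S_INR. ring. }
  intros x; apply H.
Qed.

Lemma phi_cont n x : continuous (phi n) x.
Proof. exact (ex_derive_continuous (phi n) x (ex_intro _ _ (phi_derive n x))). Qed.

Lemma phi_nonneg n x : 0 <= x -> 0 <= phi n x.
Proof.
  intros Hx.
  assert (H : forall n, 0 <= phi n x /\ 0 <= phi (S n) x).
  { clear n; intro n0; induction n0 as [|n0 [IH1 IH2]].
    - simpl. split; [apply Rlt_le, exp_pos|]. apply Rmult_le_pos; [lra|apply Rlt_le, exp_pos].
    - split; auto. rewrite phi_SS. apply Rplus_le_le_0_compat.
      + apply Rmult_le_pos; auto. apply pow2_ge_0.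
      + apply Rmult_le_pos; auto. generalize (pos_INR n0); lra. }
  apply H.
Qed.

Lemma dphi_nonpos n x : 0 <= x -> dphi n x <= 0.
Proof.
  intros Hx. destruct n; simpl dphi.
  - simpl. generalize (exp_pos (-x)); lra.
  - generalize (phi_nonneg n x Hx). intros. assert (0 <= x * phi n x) by (apply Rmult_le_pos; auto). lra.
Qed.

Lemma phi_decr n x y : 0 <= x -> x <= y -> phi n y <= phi n x.
Proof.
  intros Hx Hxy.
  destruct (MVT_gen (phi n) x y (dphi n)) as [c [Hc Heq]].
  - intros; apply phi_derive.
  - intros; apply continuity_pt_filterlim. apply phi_cont.
  - rewrite Rmin_left in Hc by lra. 
    assert (dphi n c <= 0) by (apply dphi_nonpos; lra).
    assert (dphi n c * (y - x) <= 0).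
    { apply Rmult_le_0_r; lra. }
    lra.
Qed.

Lemma phi_bound n x : 0 <= x -> 0 <= phi n x <= phi n 0.
Proof. intros; split; [apply phi_nonneg; auto| apply phi_decr; lra]. Qed.

Lemma xphi_bound n x : 0 <= x -> 0 <= x * phi n x <= (phi n 0 + phi (S (S n)) 0) / 2.
Proof.
  intros Hx. split. apply Rmult_le_pos; auto. apply phi_nonneg; auto.
  assert (H1 : x ^ 2 * phi n x <= phi (S (S n)) x).
  { rewrite phi_SS. generalize (phi_nonneg (S n) x Hx) (pos_INR n). intros.
    assert (0 <= (2 * INR n + 3) * phi (S n) x) by (apply Rmult_le_pos; lra). lra. }
  generalize (phi_bound (S (S n)) x Hx) (phi_bound n x Hx). intros [_ A] [B C].
  assert (x * phi n x <= (1 + x^2)/2 * phi n x).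
  { apply Rmult_le_compat_r; auto. assert (0 <= (x-1)^2) by apply pow2_ge_0. nra. }
  nra.
Qed.

Fixpoint Pq (n : nat) (x : R) : R :=
  match n with O => 1 | S k => Pq k x * (1 + x + 2 * INR k) end.

Lemma Pq_nonneg n x : 0 <= x -> 0 <= Pq n x.
Proof. intros Hx. induction n; simpl. lra. apply Rmult_le_pos; auto. generalize (pos_INR n); lra. Qed.

Lemma phi_le_Pq n x : 0 <= x -> phi n x <= exp (- x) * Pq n x.
Proof.
  intros Hx.
  assert (H : forall n, phi n x <= exp (- x) * Pq n x /\ phi (S n) x <= exp (- x) * Pq (S n) x).
  { clear n; intro n0; induction n0 as [|n0 [IH1 IH2]].
    - simpl. split; [lra|]. rewrite Rmult_0_r. lra.
    - split; auto. rewrite phi_SS.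
      replace (Pq (S (S n0)) x) with (Pq (S n0) x * (1 + x + 2 * INR (S n0))) by reflexivity.
      replace (Pq (S n0) x) with (Pq n0 x * (1 + x + 2 * INR n0)) at 2 by reflexivity.
      rewrite S_INR.
      generalize (Pq_nonneg n0 x Hx) (Pq_nonneg (S n0) x Hx) (exp_pos (-x)) (pos_INR n0). intros P0 P1 E N.
      replace (Pq (S n0) x) with (Pq n0 x * (1 + x + 2 * INR n0)) in IH2, P1 by reflexivity.
      assert (x ^ 2 * phi n0 x <= x ^ 2 * (exp (- x) * Pq n0 x)) by (apply Rmult_le_compat_l; [apply pow2_ge_0|auto]).
      assert ((2 * INR n0 + 3) * phi (S n0) x <= (2 * INR n0 + 3) * (exp (- x) * (Pq n0 x * (1 + x + 2 * INR n0)))) by (apply Rmult_le_compat_l; [lra|auto]).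
      assert (0 <= exp (-x) * Pq n0 x * x * (2 * INR n0 - 1 + 2)) .
      { apply Rmult_le_pos; [|lra]. apply Rmult_le_pos; [|lra]. apply Rmult_le_pos; lra. }
      change (Pq (S n0) x) with (Pq n0 x * (1 + x + 2 * INR n0)). nra. }
  apply H.
Qed.

Lemma cmul (f g : R -> R) x : continuous f x -> continuous g x -> continuous (fun t => f t * g t) x.
Proof. intros; exact (continuous_mult f g x H H0). Qed.
Lemma cplus (f g : R -> R) x : continuous f x -> continuous g x -> continuous (fun t => f t + g t) x.
Proof. intros; exact (continuous_plus f g x H H0). Qed.
Lemma ccomp (f g : R -> R) x : continuous f x -> continuous g (f x) -> continuous (fun t => g (f t)) x.
Proof. intros; exact (continuous_comp f g x H H0). Qed.
Lemma cconst (c x : R) : continuous (fun _ : R => c) x.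
Proof. exact (continuous_const c x). Qed.
Lemma cder (f : R -> R) x : ex_derive f x -> continuous f x.
Proof. intros; exact (ex_derive_continuous f x H). Qed.

Lemma dmul (f g : R -> R) x df dg : is_derive f x df -> is_derive g x dg ->
  is_derive (fun t => f t * g t) x (df * g x + f x * dg).
Proof. intros. exact (is_derive_mult f g x df dg H H0 Rmult_comm). Qed.
Lemma dplus (f g : R -> R) x df dg : is_derive f x df -> is_derive g x dg ->
  is_derive (fun t => f t + g t) x (df + dg).
Proof. intros. exact (is_derive_plus f g x df dg H H0). Qed.
Lemma dminus (f g : R -> R) x df dg : is_derive f x df -> is_derive g x dg ->
  is_derive (fun t => f t - g t) x (df - dg).
Proof. intros. exact (is_derive_minus f g x df dg H H0). Qed.
Lemma dcomp (f g : R -> R) x df dg : is_derive f x df -> is_derive g (f x) dg ->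
  is_derive (fun t => g (f t)) x (df * dg).
Proof. intros. exact (is_derive_comp g f x dg df H0 H). Qed.
Lemma dext (f g : R -> R) x l : (forall t, f t = g t) -> is_derive f x l -> is_derive g x l.
Proof. intros. apply (is_derive_ext f g); auto. Qed.

Lemma cont_phi_abs n a x : continuous (fun t => phi n (a * Rabs t)) x.
Proof.
  apply (ccomp (fun t => a * Rabs t) (phi n)).
  - apply (cmul (fun _ => a) Rabs). apply cconst. apply continuous_Rabs.
  - apply phi_cont.
Qed.

Lemma deriv_abs_nz (h dh : R -> R) a x : x <> 0 -> (forall y, is_derive h y (dh y)) ->
  is_derive (fun t => h (a * Rabs t)) x (a * (x / Rabs x) * dh (a * Rabs x)).
Proof.
  intros Hx Hd. destruct (Rlt_dec 0 x) as [Hp|Hn].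
  - apply (is_derive_ext_loc (fun t => h (a * t))).
    + eapply filter_imp; [|apply (open_gt 0 x Hp)]. intros t Ht. simpl in Ht. rewrite (Rabs_pos_eq t); [reflexivity|lra].
    + rewrite Rabs_pos_eq by lra. apply (is_derive_eq _ _ (a * dh (a * x))).
      { field. lra. }
      apply (dcomp (fun t => a * t) h x a). 
      * auto_derive; auto. ring.
      * apply Hd.
  - assert (Hn' : x < 0) by lra.
    apply (is_derive_ext_loc (fun t => h (a * - t))).
    + eapply filter_imp; [|apply (open_lt 0 x Hn')]. intros t Ht. simpl in Ht. rewrite (Rabs_left t); [reflexivity|lra].
    + rewrite Rabs_left by lra. apply (is_derive_eq _ _ (- a * dh (a * - x))).
      { field. lra. }
      apply (dcomp (fun t => a * - t) h x (- a)).
      * auto_derive; auto. ring.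
      * apply Hd.
Qed.

Lemma deriv_abs_0 (h dh : R -> R) a : (forall y, is_derive h y (dh y)) -> dh 0 = 0 ->
  continuous dh 0 -> is_derive (fun t => h (a * Rabs t)) 0 0.
Proof.
  intros Hd H0 Hc. apply is_derive_Reals.
  apply continuity_pt_filterlim in Hc.
  intros eps He.
  assert (He' : 0 < eps / (Rabs a + 1)) by (apply Rdiv_lt_0_compat; [lra| generalize (Rabs_pos a); lra]).
  destruct (Hc _ He') as [alp [Halp Hc']].
  set (del := alp / (Rabs a + 1)).
  assert (Hdel : 0 < del) by (unfold del; apply Rdiv_lt_0_compat; [lra| generalize (Rabs_pos a); lra]).
  exists (mkposreal del Hdel). intros d Hd0 Hdl. simpl in Hdl.
  rewrite Rplus_0_l, Rabs_R0, Rmult_0_r.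
  destruct (MVT_gen h 0 (a * Rabs d) dh) as [c [Hc1 Hc2]].
  { intros; apply Hd. }
  { intros; apply continuity_pt_filterlim. apply cder. eexists; apply Hd. }
  rewrite Rminus_0_r in Hc2. rewrite Hc2.
  assert (Hcb : Rabs c <= Rabs a * Rabs d).
  { assert (Rabs c <= Rabs (a * Rabs d)).
    { revert Hc1. unfold Rmin, Rmax. destruct (Rle_dec 0 (a * Rabs d)); intros;
      unfold Rabs at 1 2; repeat destruct Rcase_abs; lra. }
    rewrite Rabs_mult, Rabs_Rabsolu in H. exact H. }
  assert (Hcl : Rabs (c - 0) < alp).
  { rewrite Rminus_0_r. eapply Rle_lt_trans; [exact Hcb|].
    assert (Rabs a * Rabs d <= (Rabs a + 1) * Rabs d) by (apply Rmult_le_compat_r; [apply Rabs_pos|lra]).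
    assert ((Rabs a + 1) * Rabs d < (Rabs a + 1) * del) by (apply Rmult_lt_compat_l; [generalize (Rabs_pos a); lra|auto]).
    unfold del in H1. replace ((Rabs a + 1) * (alp / (Rabs a + 1))) with alp in H1 by (field; generalize (Rabs_pos a); lra). lra. }
  assert (Hdc : Rabs (dh c) < eps / (Rabs a + 1)).
  { destruct (Req_dec c 0) as [->|Hc0]. rewrite H0, Rabs_R0. auto.
    specialize (Hc' c). simpl in Hc'. unfold R_dist in Hc'. rewrite H0 in Hc'. rewrite !Rminus_0_r in Hc'. rewrite Rminus_0_r in Hcl.
    apply Hc'. split. split. constructor. auto. auto. }
  replace ((dh c * (a * Rabs d)) / d - 0) with (dh c * a * (Rabs d / d)) by (field; auto).
  assert (Rabs (Rabs d / d) = 1).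
  { unfold Rdiv. rewrite Rabs_mult, Rabs_Rabsolu, Rabs_inv. field. apply Rabs_no_R0; auto. }
  rewrite Rabs_mult, H, Rmult_1_r, Rabs_mult.
  assert (Rabs (dh c) * Rabs a <= eps / (Rabs a + 1) * Rabs a) by (apply Rmult_le_compat_r; [apply Rabs_pos|lra]).
  assert (eps / (Rabs a + 1) * Rabs a < eps).
  { apply Rmult_lt_reg_r with (Rabs a + 1). generalize (Rabs_pos a); lra.
    replace (eps / (Rabs a + 1) * Rabs a * (Rabs a + 1)) with (eps * Rabs a) by (field; generalize (Rabs_pos a); lra).
    nra. }
  lra.
Qed.

Lemma deriv_xw_0 (w : R -> R) : continuous w 0 -> is_derive (fun t => t * w t) 0 (w 0).
Proof.
  intros Hc. apply is_derive_Reals. apply continuity_pt_filterlim in Hc.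
  intros eps He. destruct (Hc _ He) as [alp [Halp Hc']].
  exists (mkposreal alp Halp). intros d Hd0 Hdl. simpl in Hdl.
  replace (((0 + d) * w (0 + d) - 0 * w 0) / d - w 0) with (w d - w 0) by (field_simplify; [|auto]; rewrite Rplus_0_l; field; auto).
  specialize (Hc' d). simpl in Hc'. unfold dist in Hc'. simpl in Hc'. unfold R_dist in Hc'.
  apply Hc'. split. split. constructor. auto. rewrite Rminus_0_r. auto.
Qed.

Lemma did (x : R) : is_derive (fun s : R => s) x 1.
Proof. auto_derive; auto. Qed.

Ltac rg := match goal with |- @eq _ ?x ?y => change (@eq R x y) end; unfold Rminus; ring.
Ltac toR := match goal with |- @eq _ ?x ?y => change (@eq R x y) end.

Definition Efun n a t := match n with
  | O => (1 - a * Rabs t) * phi 0 (a * Rabs t)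
  | S k => phi (S k) (a * Rabs t) - a ^ 2 * t ^ 2 * phi k (a * Rabs t) end.

Lemma sgn_sq t : t <> 0 -> t * (t / Rabs t) = Rabs t.
Proof. intros. unfold Rabs; destruct Rcase_abs; field; lra. Qed.

Lemma D1 k a t : is_derive (fun s => phi (S k) (a * Rabs s)) t (- a ^ 2 * t * phi k (a * Rabs t)).
Proof.
  destruct (Req_dec t 0) as [->|Ht].
  - apply (is_derive_eq _ _ 0). ring.
    apply (deriv_abs_0 (phi (S k)) (dphi (S k))).
    + apply phi_derive.
    + simpl. ring.
    + simpl. apply (cmul (fun y => - y) (phi k)).
      * apply cder. auto_derive. auto.
      * apply phi_cont.
  - apply (is_derive_eq _ _ (a * (t / Rabs t) * dphi (S k) (a * Rabs t))).
    + simpl. field. apply Rabs_no_R0; auto.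
    + apply deriv_abs_nz; auto. apply phi_derive.
Qed.

Lemma D2 n a t : is_derive (fun s => s * phi n (a * Rabs s)) t (Efun n a t).
Proof.
  destruct n as [|k].
  - destruct (Req_dec t 0) as [->|Ht].
    + apply (is_derive_eq _ _ (phi 0 (a * Rabs 0))).
      * simpl. rewrite Rabs_R0. ring.
      * apply (deriv_xw_0 (fun s => phi 0 (a * Rabs s))). apply cont_phi_abs.
    + apply (is_derive_eq _ _ (1 * phi 0 (a * Rabs t) + t * (a * (t / Rabs t) * dphi 0 (a * Rabs t)))).
      * unfold dphi, Efun; simpl phi. replace (t * (a * (t / Rabs t) * - exp (- (a * Rabs t)))) with (- a * (t * (t / Rabs t)) * exp (- (a * Rabs t))) by ring.
        rewrite sgn_sq by auto. ring.
      * apply (dmul (fun s => s) (fun s => phi 0 (a * Rabs s))).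
        -- apply did.
        -- apply deriv_abs_nz; auto. apply phi_derive.
  - apply (is_derive_eq _ _ (1 * phi (S k) (a * Rabs t) + t * (- a ^ 2 * t * phi k (a * Rabs t)))).
    + unfold Efun. ring.
    + apply (dmul (fun s => s) (fun s => phi (S k) (a * Rabs s))).
      * apply did.
      * apply D1.
Qed.

Lemma ode_id n a t K : a <> 0 ->
  - K * a * Efun n a t / (INR n + 1) =
  a ^ 2 * (K * phi (S n) (a * Rabs t) / (a * (INR n + 1))) - 2 * a * (K * phi n (a * Rabs t)).
Proof.
  intros Ha. assert (0 <= INR n) by apply pos_INR.
  destruct n as [|k].
  - simpl. field. lra.
  - unfold Efun. rewrite phi_SS.
    replace ((a * Rabs t) ^ 2) with (a ^ 2 * t ^ 2) by (rewrite Rpow_mult_distr, pow2_abs; ring).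
    rewrite S_INR. field. rewrite S_INR in H. lra.
Qed.

Lemma exp_small a Bd eps : 0 < a -> 0 <= Bd -> 0 < eps ->
  exists M, forall u, u <= - M -> exp (a * u) * Bd < eps.
Proof.
  intros Ha HB He.
  exists (Rabs (ln (eps / (Bd + 1))) / a). intros u Hu.
  assert (a * u <= ln (eps / (Bd + 1))).
  { assert (a * u <= - Rabs (ln (eps / (Bd + 1)))).
    { apply Rmult_le_compat_l with (r := a) in Hu; [|lra].
      replace (a * - (Rabs (ln (eps / (Bd + 1))) / a)) with (- Rabs (ln (eps / (Bd + 1)))) in Hu by (field; lra). lra. }
    generalize (Rle_abs (- ln (eps / (Bd + 1)))). rewrite Rabs_Ropp. lra. }
  assert (exp (a * u) <= eps / (Bd + 1)).
  { rewrite <- (exp_ln (eps / (Bd + 1))). 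
    destruct (Rle_lt_or_eq_dec _ _ H) as [Hl|Hl]. apply Rlt_le, exp_increasing; auto. rewrite Hl; lra.
    apply Rdiv_lt_0_compat; lra. }
  assert (exp (a * u) * Bd <= eps / (Bd + 1) * Bd) by (apply Rmult_le_compat_r; lra).
  assert (eps / (Bd + 1) * Bd < eps).
  { apply Rmult_lt_reg_r with (Bd + 1). lra.
    replace (eps / (Bd + 1) * Bd * (Bd + 1)) with (eps * Bd) by (field; lra). nra. }
  lra.
Qed.

Lemma is_RInt_of_deriv (F df f : R -> R) A B :
  (forall x, Rmin A B <= x <= Rmax A B -> is_derive F x (df x)) ->
  (forall x, Rmin A B <= x <= Rmax A B -> continuous df x) ->
  (forall x, Rmin A B <= x <= Rmax A B -> df x = f x) ->
  RInt f A B = F B - F A.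
Proof.
  intros H1 H2 H3. apply is_RInt_unique.
  apply (is_RInt_ext df). intros; apply H3; lra.
  apply (is_RInt_derive F df A B H1 H2).
Qed.

Lemma cont_exp_lin (p q x : R) : continuous (fun t => exp (p * t + q)) x.
Proof. apply cder. auto_derive. auto. Qed.

Section Conv.
Variables (n : nat) (a c C xi : R).
Hypothesis Ha : 0 < a.

Let K := c * C.
Let N1 := INR n + 1.
Let v t := K * phi (S n) (a * Rabs t) / (a * N1).
Let v1 t := - K * a * t * phi n (a * Rabs t) / N1.
Let v2 t := - K * a * Efun n a t / N1.
Let f t := (c * phi n (a * Rabs t)) * (C * exp (- a * Rabs (xi - t))).
Let F1 t := exp (a * (t - xi)) * (v t / 2 - v1 t / (2 * a)).
Let F2 t := - exp (a * (xi - t)) * (v t / 2 + v1 t / (2 * a)).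

Lemma N1_pos : 0 < N1.
Proof. unfold N1. generalize (pos_INR n); lra. Qed.

Lemma Hv t : is_derive v t (v1 t).
Proof.
  unfold v, v1. apply (is_derive_eq _ _ (K / (a * N1) * (- a ^ 2 * t * phi n (a * Rabs t)))).
  { field. split; [generalize N1_pos|]; lra. }
  apply (dext (fun s => K / (a * N1) * phi (S n) (a * Rabs s))).
  { intros; unfold Rdiv; ring. }
  apply is_derive_scal. apply D1.
Qed.

Lemma Hv1 t : is_derive v1 t (v2 t).
Proof.
  unfold v1, v2. apply (is_derive_eq _ _ (- K * a / N1 * Efun n a t)).
  { field. generalize N1_pos; lra. }
  apply (dext (fun s => - K * a / N1 * (s * phi n (a * Rabs s)))).
  { intros; unfold Rdiv; ring. }
  apply is_derive_scal. apply D2.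
Qed.

Lemma Hode t : v2 t = a ^ 2 * v t - 2 * a * (K * phi n (a * Rabs t)).
Proof. unfold v2, v, N1. apply ode_id. lra. Qed.

Lemma HF1 t : is_derive F1 t (K * phi n (a * Rabs t) * exp (a * (t - xi))).
Proof.
  unfold F1.
  apply (is_derive_eq _ _ (a * exp (a * (t - xi)) * (v t / 2 - v1 t / (2 * a)) + exp (a * (t - xi)) * (v1 t / 2 - v2 t / (2 * a)))).
  { rewrite Hode. field. lra. }
  apply (dmul (fun s => exp (a * (s - xi))) (fun s => v s / 2 - v1 s / (2 * a))).
  - auto_derive; auto. rg.
  - apply (dminus (fun s => v s / 2) (fun s => v1 s / (2 * a))).
    + apply (is_derive_eq _ _ (/2 * v1 t)). field. apply (dext (fun s => / 2 * v s)). intros; field. apply is_derive_scal. apply Hv.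
    + apply (is_derive_eq _ _ (/(2 * a) * v2 t)). field; lra. apply (dext (fun s => / (2 * a) * v1 s)). intros; field; lra. apply is_derive_scal. apply Hv1.
Qed.

Lemma HF2 t : is_derive F2 t (K * phi n (a * Rabs t) * exp (a * (xi - t))).
Proof.
  unfold F2.
  apply (is_derive_eq _ _ (a * exp (a * (xi - t)) * (v t / 2 + v1 t / (2 * a)) + - exp (a * (xi - t)) * (v1 t / 2 + v2 t / (2 * a)))).
  { rewrite Hode. field. lra. }
  apply (dmul (fun s => - exp (a * (xi - s))) (fun s => v s / 2 + v1 s / (2 * a))).
  - auto_derive; auto. rg.
  - apply (dplus (fun s => v s / 2) (fun s => v1 s / (2 * a))).
    + apply (is_derive_eq _ _ (/2 * v1 t)). field. apply (dext (fun s => / 2 * v s)). intros; field. apply is_derive_scal. apply Hv.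
    + apply (is_derive_eq _ _ (/(2 * a) * v2 t)). field; lra. apply (dext (fun s => / (2 * a) * v1 s)). intros; field; lra. apply is_derive_scal. apply Hv1.
Qed.

Lemma cont_g1 t : continuous (fun s => K * phi n (a * Rabs s) * exp (a * (s - xi))) t.
Proof.
  apply (cmul (fun s => K * phi n (a * Rabs s)) (fun s => exp (a * (s - xi)))).
  - apply (cmul (fun _ => K)). apply cconst. apply cont_phi_abs.
  - apply cder. auto_derive. auto.
Qed.

Lemma cont_g2 t : continuous (fun s => K * phi n (a * Rabs s) * exp (a * (xi - s))) t.
Proof.
  apply (cmul (fun s => K * phi n (a * Rabs s)) (fun s => exp (a * (xi - s)))).
  - apply (cmul (fun _ => K)). apply cconst. apply cont_phi_abs.
  - apply cder. auto_derive. auto.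
Qed.

Lemma cont_f t : continuous f t.
Proof.
  unfold f. apply (cmul (fun s => c * phi n (a * Rabs s)) (fun s => C * exp (- a * Rabs (xi - s)))).
  - apply (cmul (fun _ => c)). apply cconst. apply cont_phi_abs.
  - apply (cmul (fun _ => C)). apply cconst.
    apply (ccomp (fun s => - a * Rabs (xi - s)) exp).
    + apply (cmul (fun _ => - a)). apply cconst. apply (ccomp (fun s => xi - s) Rabs).
      apply cder. auto_derive. auto. apply continuous_Rabs.
    + apply cder. auto_derive. auto.
Qed.

Lemma ex_f A B : ex_RInt f A B.
Proof. apply (@ex_RInt_continuous R_CompleteNormedModule). intros; apply cont_f. Qed.

Lemma RInt_f A B : A <= xi -> xi <= B -> RInt f A B = v xi - F1 A + F2 B.
Proof.
  intros HA HB.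
  rewrite <- (RInt_Chasles f A xi B (ex_f _ _) (ex_f _ _)).
  change (plus (RInt f A xi) (RInt f xi B)) with (RInt f A xi + RInt f xi B).
  rewrite (is_RInt_of_deriv F1 (fun s => K * phi n (a * Rabs s) * exp (a * (s - xi))) f A xi).
  rewrite (is_RInt_of_deriv F2 (fun s => K * phi n (a * Rabs s) * exp (a * (xi - s))) f xi B).
  - unfold F1, F2. replace (a * (xi - xi)) with 0 by ring. rewrite exp_0. toR. field. lra.
  - intros; apply HF2.
  - intros; apply cont_g2.
  - intros x Hx. rewrite Rmin_left, Rmax_right in Hx by lra. unfold f, K.
    rewrite (Rabs_left1 (xi - x)) by lra. replace (- a * - (xi - x)) with (a * (xi - x)) by ring. ring.
  - intros; apply HF1.
  - intros; apply cont_g1.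
  - intros x Hx. rewrite Rmin_left, Rmax_right in Hx by lra. unfold f, K.
    rewrite (Rabs_pos_eq (xi - x)) by lra. replace (- a * (xi - x)) with (a * (x - xi)) by ring. ring.
Qed.

Let Bd := Rabs K * (phi (S n) 0 + phi n 0 + phi (S (S n)) 0) / (a * N1).

Lemma Bd_nonneg : 0 <= Bd.
Proof.
  unfold Bd. apply Rmult_le_pos. apply Rmult_le_pos. apply Rabs_pos.
  generalize (phi_nonneg (S n) 0) (phi_nonneg n 0) (phi_nonneg (S (S n)) 0). intros; lra.
  apply Rlt_le, Rinv_0_lt_compat. generalize N1_pos; nra.
Qed.

Lemma vv_bound t sg : sg = 1 \/ sg = -1 -> Rabs (v t / 2 + sg * (v1 t / (2 * a))) <= Bd.
Proof.
  intros Hsg.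
  assert (Hx : 0 <= a * Rabs t) by (apply Rmult_le_pos; [lra|apply Rabs_pos]).
  destruct (phi_bound (S n) _ Hx) as [P1 P2].
  destruct (xphi_bound n _ Hx) as [Q1 Q2].
  generalize (phi_nonneg n 0 (Rle_refl 0)) (phi_nonneg (S n) 0 (Rle_refl 0)) (phi_nonneg (S (S n)) 0 (Rle_refl 0)). intros Z1 Z2 Z3.
  generalize N1_pos. intros HN.
  assert (E1 : Rabs (v t / 2) <= Rabs K * phi (S n) 0 / (a * N1) / 2).
  { unfold v. rewrite Rabs_div, Rabs_div, Rabs_mult, (Rabs_pos_eq (phi _ _)), (Rabs_pos_eq (a * N1)) by (try lra; try nra).
    rewrite (Rabs_pos_eq 2) by lra. unfold Rdiv. apply Rmult_le_compat_r. lra. apply Rmult_le_compat_r.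
    apply Rlt_le, Rinv_0_lt_compat; nra. apply Rmult_le_compat_l. apply Rabs_pos. lra. }
  assert (E2 : Rabs (sg * (v1 t / (2 * a))) <= Rabs K * (phi n 0 + phi (S (S n)) 0) / (a * N1) / 4).
  { rewrite Rabs_mult. replace (Rabs sg) with 1 by (destruct Hsg; subst; unfold Rabs; destruct Rcase_abs; lra).
    rewrite Rmult_1_l. unfold v1.
    replace (- K * a * t * phi n (a * Rabs t) / N1 / (2 * a)) with (- K * (t * phi n (a * Rabs t)) / (2 * N1)) by (field; lra).
    unfold Rdiv. rewrite Rabs_mult, Rabs_mult, Rabs_Ropp, Rabs_mult, (Rabs_pos_eq (phi _ _)) by (apply phi_nonneg; auto).
    rewrite (Rabs_pos_eq (/ (2 * N1))) by (apply Rlt_le, Rinv_0_lt_compat; lra).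
    assert (Rabs t * phi n (a * Rabs t) <= (phi n 0 + phi (S (S n)) 0) / 2 / a).
    { apply Rmult_le_reg_l with a. lra. replace (a * ((phi n 0 + phi (S (S n)) 0) / 2 / a)) with ((phi n 0 + phi (S (S n)) 0) / 2) by (field; lra). rewrite <- Rmult_assoc. lra. }
    assert (0 <= Rabs t * phi n (a * Rabs t)) by (apply Rmult_le_pos; [apply Rabs_pos|apply phi_nonneg; auto]).
    apply Rle_trans with (Rabs K * ((phi n 0 + phi (S (S n)) 0) / 2 / a) * / (2 * N1)).
    { apply Rmult_le_compat_r. apply Rlt_le, Rinv_0_lt_compat; lra. apply Rmult_le_compat_l. apply Rabs_pos. auto. }
    right. field. lra. }
  eapply Rle_trans. apply Rabs_triang.
  unfold Bd. 
  assert (Rabs K * phi (S n) 0 / (a * N1) / 2 + Rabs K * (phi n 0 + phi (S (S n)) 0) / (a * N1) / 4 <= Rabs K * (phi (S n) 0 + phi n 0 + phi (S (S n)) 0) / (a * N1)).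
  { assert (0 <= Rabs K / (a * N1)) by (apply Rmult_le_pos; [apply Rabs_pos| apply Rlt_le, Rinv_0_lt_compat; nra]).
    replace (Rabs K * phi (S n) 0 / (a * N1) / 2 + Rabs K * (phi n 0 + phi (S (S n)) 0) / (a * N1) / 4) with (Rabs K / (a * N1) * (phi (S n) 0 / 2 + (phi n 0 + phi (S (S n)) 0) / 4)) by (field; nra).
    replace (Rabs K * (phi (S n) 0 + phi n 0 + phi (S (S n)) 0) / (a * N1)) with (Rabs K / (a * N1) * (phi (S n) 0 + phi n 0 + phi (S (S n)) 0)) by (field; nra).
    apply Rmult_le_compat_l; auto. lra. }
  lra.
Qed.

Lemma conv_main : improper_integral_R f (v xi).
Proof.
  apply improper_R_of_RInt.
  - intros; apply ex_f.
  - intros eps He.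
    assert (He2 : 0 < eps / 2) by lra.
    destruct (exp_small a Bd (eps / 2) Ha Bd_nonneg He2) as [M HM].
    exists (Rabs M + Rabs xi). intros A B HA HB.
    assert (hA : A <= xi) by (generalize (Rabs_pos M) (Rle_abs (- xi)); rewrite Rabs_Ropp; lra).
    assert (hB : xi <= B) by (generalize (Rabs_pos M) (Rle_abs xi); lra).
    rewrite RInt_f by auto.
    replace (v xi - F1 A + F2 B - v xi) with (F2 B - F1 A) by ring.
    assert (A1 : Rabs (F1 A) < eps / 2).
    { unfold F1. rewrite Rabs_mult, Rabs_pos_eq by (apply Rlt_le, exp_pos).
      eapply Rle_lt_trans. apply Rmult_le_compat_l. apply Rlt_le, exp_pos.
      replace (v A / 2 - v1 A / (2 * a)) with (v A / 2 + (-1) * (v1 A / (2 * a))) by ring.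
      apply vv_bound. auto. apply HM.
      generalize (Rle_abs M) (Rle_abs (- xi)); rewrite Rabs_Ropp; lra. }
    assert (A2 : Rabs (F2 B) < eps / 2).
    { unfold F2. rewrite Rabs_mult, Rabs_Ropp, Rabs_pos_eq by (apply Rlt_le, exp_pos).
      eapply Rle_lt_trans. apply Rmult_le_compat_l. apply Rlt_le, exp_pos.
      replace (v B / 2 + v1 B / (2 * a)) with (v B / 2 + 1 * (v1 B / (2 * a))) by ring.
      apply vv_bound. auto. apply HM.
      generalize (Rle_abs M) (Rle_abs xi); lra. }
    eapply Rle_lt_trans. unfold Rminus. apply Rabs_triang. rewrite Rabs_Ropp. lra.
Qed.

End Conv.

Lemma conv_phi n a c C xi : 0 < a ->
  improper_integral_R (fun t => (c * phi n (a * Rabs t)) * (C * exp (- a * Rabs (xi - t))))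
    (c * C * phi (S n) (a * Rabs xi) / (a * (INR n + 1))).
Proof. intros Ha. exact (conv_main n a c C xi Ha). Qed.

Definition gf (y : R) := exp (- (y ^ 2)).
Definition G (t : R) : R := RInt gf 0 t.

Lemma gf_cont y : continuous gf y.
Proof. apply cder. unfold gf. auto_derive. auto. Qed.

Lemma ex_gf a b : ex_RInt gf a b.
Proof. apply (@ex_RInt_continuous R_CompleteNormedModule). intros; apply gf_cont. Qed.

Lemma G_derive t : is_derive G t (gf t).
Proof.
  apply (is_derive_RInt gf G 0 t).
  - apply filter_forall. intros b. unfold G. apply (RInt_correct (V:=R_CompleteNormedModule)). apply ex_gf.
  - apply gf_cont.
Qed.

Definition uf (u s : R) := exp (- (u ^ 2 * (1 + s ^ 2))) / (1 + s ^ 2).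
Definition U (t : R) : R := RInt (uf t) 0 1.

Lemma ops (s : R) : 0 < 1 + s ^ 2.
Proof. generalize (pow2_ge_0 s); lra. Qed.

Lemma uf_cont_s u s : continuous (uf u) s.
Proof. apply cder. unfold uf. auto_derive. generalize (ops s); lra. Qed.

Lemma ex_uf u a b : ex_RInt (uf u) a b.
Proof. apply (@ex_RInt_continuous R_CompleteNormedModule). intros; apply uf_cont_s. Qed.

Lemma uf_du u s : is_derive (fun z => uf z s) u (- 2 * u * exp (- (u ^ 2 * (1 + s ^ 2)))).
Proof. unfold uf. auto_derive. auto. replace (- (u * (u * 1) * (1 + s * (s * 1)))) with (- (u ^ 2 * (1 + s ^ 2))) by ring. toR. field. generalize (ops s); lra. Qed.

Lemma U_derive t : is_derive U t (RInt (fun s => - 2 * t * exp (- (t ^ 2 * (1 + s ^ 2)))) 0 1).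
Proof.
  unfold U.
  assert (E : RInt (fun s => - 2 * t * exp (- (t ^ 2 * (1 + s ^ 2)))) 0 1 = RInt (fun s => Derive (fun u => uf u s) t) 0 1).
  { apply RInt_ext. intros s _. symmetry. apply is_derive_unique. apply uf_du. }
  rewrite E.
  apply (is_derive_RInt_param uf 0 1 t).
  - apply filter_forall. intros x s _. eexists. apply uf_du.
  - intros s _.
    apply (continuity_2d_pt_ext (fun u v => - 2 * u * exp (- (u ^ 2 * (1 + v ^ 2))))).
    { intros u v. symmetry. apply is_derive_unique. apply uf_du. }
    apply (continuity_2d_pt_mult (fun u v => - 2 * u) (fun u v => exp (- (u ^ 2 * (1 + v ^ 2))))).
    + apply (continuity_2d_pt_mult (fun u v => - 2) (fun u v => u)). apply continuity_2d_pt_const. apply continuity_2d_pt_id1.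
    + apply (continuity_1d_2d_pt_comp exp (fun u v => - (u ^ 2 * (1 + v ^ 2)))).
      * apply derivable_continuous_pt. apply derivable_pt_exp.
      * apply (continuity_2d_pt_opp (fun u v => u ^ 2 * (1 + v ^ 2))).
        apply (continuity_2d_pt_mult (fun u v => u ^ 2) (fun u v => 1 + v ^ 2)).
        -- apply (continuity_2d_pt_ext (fun u v => u * u)). intros; ring.
           apply (continuity_2d_pt_mult (fun u v => u) (fun u v => u)); apply continuity_2d_pt_id1.
        -- apply (continuity_2d_pt_plus (fun u v => 1) (fun u v => v ^ 2)). apply continuity_2d_pt_const.
           apply (continuity_2d_pt_ext (fun u v => v * v)). intros; ring.
           apply (continuity_2d_pt_mult (fun u v => v) (fun u v => v)); apply continuity_2d_pt_id2.
  - apply filter_forall. intros y. apply ex_uf.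
Qed.

Lemma U_derive' t : RInt (fun s => - 2 * t * exp (- (t ^ 2 * (1 + s ^ 2)))) 0 1 = - 2 * gf t * G t.
Proof.
  transitivity (RInt (fun s => scal (- 2 * exp (- t ^ 2)) (scal t (gf (t * s + 0)))) 0 1).
  { apply RInt_ext. intros s _. unfold scal; simpl. unfold mult; simpl. unfold gf.
    replace (- (t * (t * 1) * (1 + s * (s * 1)))) with (- (t * (t * 1)) + - ((t * s + 0) ^ 2)) by ring. rewrite exp_plus. ring. }
  rewrite (RInt_scal (V:=R_CompleteNormedModule)).
  - rewrite (RInt_comp_lin (V:=R_CompleteNormedModule)). unfold G. replace (t * 0 + 0) with 0 by ring. replace (t * 1 + 0) with t by ring.
    unfold scal; simpl. unfold mult; simpl. unfold gf. replace (t * (t * 1)) with (t ^ 2) by ring. reflexivity.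
    apply ex_gf.
  - apply (@ex_RInt_continuous R_CompleteNormedModule). intros z _.
    apply cder. unfold gf, scal; simpl; unfold mult; simpl. auto_derive. auto.
Qed.

Definition Hg t := G t ^ 2 + U t.

Lemma Hg_derive t : is_derive Hg t 0.
Proof.
  unfold Hg. apply (is_derive_eq _ _ (2 * G t * gf t + - 2 * gf t * G t)). ring.
  apply (dplus (fun s => G s ^ 2) U).
  - apply (is_derive_eq _ _ (gf t * (2 * G t))). ring.
    apply (dcomp G (fun y => y ^ 2)). apply G_derive. auto_derive; auto. rg.
  - rewrite <- U_derive'. apply U_derive.
Qed.

Lemma Hg_cont t : continuity_pt Hg t.
Proof. apply continuity_pt_filterlim. apply cder. eexists. apply Hg_derive. Qed.

Lemma Hg_0 : Hg 0 = PI / 4.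
Proof.
  unfold Hg, G, U. rewrite RInt_point. change (zero : R) with 0.
  rewrite (is_RInt_of_deriv atan (fun s => / (1 + s ^ 2)) (uf 0) 0 1).
  - rewrite atan_1, atan_0. ring.
  - intros; apply is_derive_Reals. apply derivable_pt_lim_atan.
  - intros. apply cder. auto_derive. generalize (ops x); lra.
  - intros x _. unfold uf. replace (- (0 ^ 2 * (1 + x ^ 2))) with 0 by ring. rewrite exp_0. field. generalize (ops x); lra.
Qed.

Lemma Hg_const t : Hg t = PI / 4.
Proof.
  rewrite <- Hg_0. destruct (MVT_gen Hg 0 t (fun _ => 0)) as [c [_ Hc]].
  - intros; apply Hg_derive.
  - intros; apply Hg_cont.
  - lra.
Qed.

Lemma exp_mono x y : x <= y -> exp x <= exp y.
Proof. intros H. destruct (Rle_lt_or_eq_dec _ _ H). left; apply exp_increasing; auto. subst; lra. Qed.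

Lemma U_bound t : 0 <= U t <= gf t.
Proof.
  unfold U. split.
  - apply RInt_ge_0. lra. apply ex_uf. intros s _. unfold uf. apply Rlt_le, Rdiv_lt_0_compat. apply exp_pos. apply ops.
  - apply Rle_trans with (RInt (fun _ => gf t) 0 1).
    + apply RInt_le. lra. apply ex_uf. apply ex_RInt_const.
      intros s Hs. unfold uf, gf.
      assert (E1 : exp (- (t ^ 2 * (1 + s ^ 2))) <= exp (- (t ^ 2))).
      { apply exp_mono. generalize (pow2_ge_0 t) (pow2_ge_0 s). nra. }
      assert (E2 : exp (- (t ^ 2 * (1 + s ^ 2))) / (1 + s ^ 2) <= exp (- (t ^ 2 * (1 + s ^ 2)))).
      { unfold Rdiv. generalize (exp_pos (- (t ^ 2 * (1 + s ^ 2)))) (pow2_ge_0 s). intros.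
        assert (/ (1 + s ^ 2) <= 1). { rewrite <- Rinv_1. apply Rinv_le_contravar; lra. }
        assert (0 < / (1 + s ^2)) by (apply Rinv_0_lt_compat; lra). nra. }
      lra.
    + rewrite RInt_const. unfold scal; simpl; unfold mult; simpl. lra.
Qed.

Lemma G_nonneg t : 0 <= t -> 0 <= G t.
Proof. intros. unfold G. apply RInt_ge_0; auto. apply ex_gf. intros; apply Rlt_le, exp_pos. Qed.

Lemma G_close t : 0 <= t -> Rabs (G t - sqrt PI / 2) <= 2 * gf t / sqrt PI.
Proof.
  intros Ht.
  assert (HP : 0 < sqrt PI) by (apply sqrt_lt_R0, PI_RGT_0).
  assert (HG : 0 <= G t) by (apply G_nonneg; auto).
  assert (E : G t ^ 2 = PI / 4 - U t) by (generalize (Hg_const t); unfold Hg; lra).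
  assert (Hs : sqrt PI * sqrt PI = PI) by (apply sqrt_sqrt; generalize PI_RGT_0; lra).
  assert (F : G t - sqrt PI / 2 = - U t / (G t + sqrt PI / 2)).
  { assert (F0 : (G t - sqrt PI / 2) * (G t + sqrt PI / 2) = - U t).
    { replace ((G t - sqrt PI / 2) * (G t + sqrt PI / 2)) with (G t ^ 2 - sqrt PI * sqrt PI / 4) by field.
      rewrite E, Hs. ring. }
    apply Rmult_eq_reg_r with (G t + sqrt PI / 2); [|lra]. rewrite F0. field. lra. }
  rewrite F. unfold Rdiv. rewrite Rabs_mult, Rabs_Ropp, Rabs_inv.
  destruct (U_bound t) as [U1 U2].
  rewrite (Rabs_pos_eq (U t)) by auto. rewrite (Rabs_pos_eq (G t + sqrt PI * / 2)) by lra.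
  apply Rle_trans with (gf t * / (sqrt PI * / 2)).
  - apply Rmult_le_compat; auto. apply Rlt_le, Rinv_0_lt_compat; lra.
    apply Rinv_le_contravar; lra.
  - right. field. lra.
Qed.

Definition lim0p (F : R -> R) (A : R) := forall eps, 0 < eps -> exists d, 0 < d /\ forall a, 0 < a < d -> Rabs (F a - A) < eps.
Definition limpi (F : R -> R) (B : R) := forall eps, 0 < eps -> exists M, forall b, M <= b -> Rabs (F b - B) < eps.

Lemma DL_of_anti (P : R -> R -> R) Hf A B :
  (forall a b, 0 < a -> a <= b -> P a b = Hf b - Hf a) -> lim0p Hf A -> limpi Hf B -> DL P (B - A).
Proof.
  intros HP HA HB eps He.
  destruct (HA (eps/2)) as [d [Hd Hd']]. lra.
  destruct (HB (eps/2)) as [M HM]. lra.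
  exists d; split; auto. exists M. intros a b ha hab had hbm.
  rewrite HP by auto.
  specialize (Hd' a (conj ha had)). specialize (HM b hbm).
  replace (Hf b - Hf a - (B - A)) with ((Hf b - B) + - (Hf a - A)) by ring.
  eapply Rle_lt_trans. apply Rabs_triang. rewrite Rabs_Ropp. lra.
Qed.

Lemma DL_comb P1 P2 P3 l1 l2 l3 (c : R) :
  DL P1 l1 -> DL P2 l2 -> DL P3 l3 -> DL (fun a b => P1 a b + c * P2 a b + P3 a b) (l1 + c * l2 + l3).
Proof.
  intros H1 H2 H3 eps He.
  set (e := eps / (3 * (Rabs c + 1))).
  assert (Hc : 0 < Rabs c + 1) by (generalize (Rabs_pos c); lra).
  assert (He' : 0 < e) by (unfold e; apply Rdiv_lt_0_compat; lra).
  destruct (H1 e He') as [d1 [Hd1 [M1 HM1]]].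
  destruct (H2 e He') as [d2 [Hd2 [M2 HM2]]].
  destruct (H3 e He') as [d3 [Hd3 [M3 HM3]]].
  exists (Rmin d1 (Rmin d2 d3)). split.
  { apply Rmin_glb_lt; auto. apply Rmin_glb_lt; auto. }
  exists (Rmax M1 (Rmax M2 M3)). intros a b ha hab had hbm.
  assert (X1 : a < d1) by (eapply Rlt_le_trans; [exact had| apply Rmin_l]).
  assert (X2 : a < d2) by (eapply Rlt_le_trans; [exact had| eapply Rle_trans; [apply Rmin_r|apply Rmin_l]]).
  assert (X3 : a < d3) by (eapply Rlt_le_trans; [exact had| eapply Rle_trans; [apply Rmin_r|apply Rmin_r]]).
  assert (Y1 : M1 <= b) by (eapply Rle_trans; [apply Rmax_l|exact hbm]).
  assert (Y2 : M2 <= b) by (eapply Rle_trans; [eapply Rle_trans; [apply Rmax_l|apply Rmax_r]|exact hbm]).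
  assert (Y3 : M3 <= b) by (eapply Rle_trans; [eapply Rle_trans; [apply Rmax_r|apply Rmax_r]|exact hbm]).
  specialize (HM1 a b ha hab X1 Y1). specialize (HM2 a b ha hab X2 Y2). specialize (HM3 a b ha hab X3 Y3).
  replace (P1 a b + c * P2 a b + P3 a b - (l1 + c * l2 + l3)) with ((P1 a b - l1) + c * (P2 a b - l2) + (P3 a b - l3)) by ring.
  eapply Rle_lt_trans. apply Rabs_triang. eapply Rle_lt_trans. apply Rplus_le_compat_r. apply Rabs_triang.
  rewrite Rabs_mult.
  assert (Rabs c * Rabs (P2 a b - l2) <= (Rabs c + 1) * e) by (apply Rmult_le_compat; try apply Rabs_pos; lra).
  assert (e * (Rabs c + 1) * 3 = eps) by (unfold e; field; lra).
  assert (e <= (Rabs c + 1) * e) by (generalize (Rabs_pos c); nra).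
  assert (e * (Rabs c + 1) * 3 = 3 * ((Rabs c + 1) * e)) by ring.
  lra.
Qed.

Lemma lim0p_cont Hf : continuous Hf 0 -> lim0p Hf (Hf 0).
Proof.
  intros Hc. apply continuity_pt_filterlim in Hc. intros eps He.
  destruct (Hc eps He) as [d [Hd Hd']]. exists d. split; auto.
  intros a Ha. destruct (Req_dec a 0). lra. apply Hd'. split. split. constructor. auto.
  simpl. unfold R_dist. rewrite Rminus_0_r, Rabs_pos_eq; lra.
Qed.

Lemma RInt_anti (F f : R -> R) a b : (forall t, is_derive F t (f t)) -> (forall t, continuous f t) ->
  RInt f a b = F b - F a.
Proof. intros; apply (is_RInt_of_deriv F f f); auto. Qed.

Definition bi (nu x t : R) := exp (- x * cosh t) * cosh (nu * t).

Lemma bi_cont nu x t : continuous (bi nu x) t.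
Proof. apply cder. unfold bi, cosh. auto_derive. auto. Qed.

Lemma ex_bi nu x a b : ex_RInt (bi nu x) a b.
Proof. apply (@ex_RInt_continuous R_CompleteNormedModule). intros; apply bi_cont. Qed.

Definition sh (t : R) := (exp (t / 2) - exp (- (t / 2))) / 2.

Lemma cosh_sh t : cosh t = 1 + 2 * sh t ^ 2.
Proof.
  unfold cosh, sh.
  assert (E1 : exp t = exp (t / 2) * exp (t / 2)) by (rewrite <- exp_plus; f_equal; field).
  assert (E2 : exp (- t) = exp (- (t / 2)) * exp (- (t / 2))) by (rewrite <- exp_plus; f_equal; field).
  assert (E3 : exp (t / 2) * exp (- (t / 2)) = 1) by (rewrite <- exp_plus; replace (t / 2 + - (t / 2)) with 0 by ring; apply exp_0).
  rewrite E1, E2. nra.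
Qed.

Lemma sh_lower b : 0 <= b -> b / 4 <= sh b.
Proof.
  intros Hb. unfold sh.
  generalize (exp_ineq1_le (b / 2)). intros.
  assert (exp (- (b / 2)) <= 1). { rewrite <- exp_0. apply exp_mono. lra. }
  lra.
Qed.

Section Base.
Variables (nu x : R).
Hypothesis Hx : 0 < x.
Hypothesis Hnu : forall t, cosh (nu * t) = cosh (t / 2).

Let s2 := sqrt (2 * x).
Let cst := 2 * exp (- x) / s2.
Let Hb t := cst * G (s2 * sh t).

Lemma s2_pos : 0 < s2.
Proof. unfold s2. apply sqrt_lt_R0. lra. Qed.

Lemma Hb_deriv t : is_derive Hb t (bi nu x t).
Proof.
  unfold Hb.
  assert (Hsh : is_derive (fun s => s2 * sh s) t (s2 * ((exp (t / 2) + exp (- (t / 2))) / 4))).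
  { unfold sh. auto_derive. auto. toR. unfold Rdiv. field. }
  apply (is_derive_eq _ _ (cst * (s2 * ((exp (t / 2) + exp (- (t / 2))) / 4) * gf (s2 * sh t)))).
  2: { apply is_derive_scal. apply (dcomp (fun s => s2 * sh s) G). apply Hsh. apply G_derive. }
  unfold bi, cst, gf. rewrite Hnu. rewrite cosh_sh.
  assert (S2 : s2 * s2 = 2 * x) by (unfold s2; apply sqrt_sqrt; lra).
  replace (- ((s2 * sh t) ^ 2)) with (- (2 * x) * sh t ^ 2) by (rewrite <- S2; ring).
  replace (- x * (1 + 2 * sh t ^ 2)) with (- x + - (2 * x) * sh t ^ 2) by ring.
  rewrite exp_plus. unfold cosh. replace (- (t / 2)) with (- (t / 2)) by ring.
  generalize s2_pos. intros. field. lra.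
Qed.

Lemma Hb_cont t : continuous Hb t.
Proof. apply cder. eexists. apply Hb_deriv. Qed.

Lemma Hb_0 : Hb 0 = 0.
Proof.
  unfold Hb, sh. replace (0 / 2) with 0 by field. replace (- 0) with 0 by ring.
  rewrite Rminus_diag. replace (s2 * (0 / 2)) with 0 by field. assert (G 0 = 0) by (unfold G; rewrite RInt_point; reflexivity). rewrite H. ring.
Qed.

Lemma Hb_lim : limpi Hb (sqrt (PI / (2 * x)) * exp (- x)).
Proof.
  intros eps He.
  assert (HP : 0 < sqrt PI) by (apply sqrt_lt_R0, PI_RGT_0).
  generalize s2_pos; intros Hs2.
  set (Bd := cst * (2 / sqrt PI)).
  assert (HBd : 0 <= Bd) by (unfold Bd, cst; apply Rmult_le_pos; [apply Rlt_le, Rdiv_lt_0_compat; [generalize (exp_pos (-x)); lra|lra]| apply Rlt_le, Rdiv_lt_0_compat; lra]).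
  destruct (exp_small (s2 / 4) Bd eps) as [M HM]; auto. lra.
  exists (Rmax (Rabs M) (4 / s2)). intros b Hb'.
  assert (hb1 : Rabs M <= b) by (eapply Rle_trans; [apply Rmax_l|exact Hb']).
  assert (hb2 : 4 / s2 <= b) by (eapply Rle_trans; [apply Rmax_r|exact Hb']).
  assert (hb0 : 0 <= b) by (generalize (Rabs_pos M); lra).
  assert (Hy : s2 * (b / 4) <= s2 * sh b) by (apply Rmult_le_compat_l; [lra|apply sh_lower; auto]).
  set (y := s2 * sh b) in *.
  assert (Hy1 : 1 <= y).
  { apply Rle_trans with (s2 * (b / 4)); auto. apply Rmult_le_reg_l with (4 / s2). apply Rdiv_lt_0_compat; lra.
    replace (4 / s2 * (s2 * (b / 4))) with b by (field; lra). lra. }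
  assert (HL : sqrt (PI / (2 * x)) * exp (- x) = cst * (sqrt PI / 2)).
  { unfold cst. rewrite sqrt_div_alt by lra. fold s2. field. lra. }
  rewrite HL. unfold Hb. fold y.
  replace (cst * G y - cst * (sqrt PI / 2)) with (cst * (G y - sqrt PI / 2)) by ring.
  assert (Hcst : 0 < cst) by (unfold cst; apply Rdiv_lt_0_compat; [generalize (exp_pos (-x)); lra|lra]).
  rewrite Rabs_mult, (Rabs_pos_eq cst) by lra.
  apply Rle_lt_trans with (cst * (2 * gf y / sqrt PI)).
  { apply Rmult_le_compat_l. lra. apply G_close. lra. }
  assert (Hg : gf y <= exp (s2 / 4 * - b)).
  { unfold gf. apply exp_mono. assert (y <= y ^ 2) by nra. nra. }
  apply Rle_lt_trans with (exp (s2 / 4 * - b) * Bd).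
  { unfold Bd. assert (0 <= / sqrt PI) by (apply Rlt_le, Rinv_0_lt_compat; auto).
    replace (cst * (2 * gf y / sqrt PI)) with (gf y * (cst * (2 / sqrt PI))) by (field; lra).
    apply Rmult_le_compat_r; auto. }
  apply HM. generalize (Rle_abs M). lra.
Qed.

Lemma bessel_base : improper_integral_0_inf (fun t => exp (- x * cosh t) * cosh (nu * t)) (sqrt (PI / (2 * x)) * exp (- x)).
Proof.
  apply improper_0_of_RInt.
  - intros; apply ex_bi.
  - replace (sqrt (PI / (2 * x)) * exp (- x)) with (sqrt (PI / (2 * x)) * exp (- x) - Hb 0) by (rewrite Hb_0; ring).
    apply (DL_of_anti _ Hb).
    + intros a b _ _. apply (RInt_anti Hb (bi nu x)). apply Hb_deriv. apply bi_cont.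
    + apply lim0p_cont. apply Hb_cont.
    + apply Hb_lim.
Qed.

End Base.

Lemma DL_ext P Q l : (forall a b, 0 < a -> a <= b -> P a b = Q a b) -> DL Q l -> DL P l.
Proof.
  intros HE HQ eps He. destruct (HQ eps He) as [d [Hd [M HM]]]. exists d; split; auto. exists M.
  intros. rewrite HE by auto. auto.
Qed.

Lemma cosh_diff A B : cosh (A + B) - cosh (A - B) = 2 * sinh A * sinh B.
Proof.
  unfold cosh, sinh. unfold Rminus. rewrite !exp_plus.
  replace (- (A + B)) with (- A + - B) by ring. replace (- (A + - B)) with (- A + B) by ring.
  rewrite !exp_plus. field.
Qed.

Lemma cosh_lower b : 0 <= b -> b ^ 2 / 8 <= cosh b.
Proof.
  intros Hb. unfold cosh.
  assert (exp b = exp (b / 2) * exp (b / 2)) by (rewrite <- exp_plus; f_equal; field).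
  generalize (exp_ineq1_le (b / 2)) (exp_pos (- b)). intros. nra.
Qed.

Lemma sinh_abs y : Rabs (sinh y) <= exp (Rabs y).
Proof.
  unfold sinh. assert (exp y <= exp (Rabs y)) by (apply exp_mono; apply Rle_abs).
  assert (exp (- y) <= exp (Rabs y)) by (apply exp_mono; rewrite <- Rabs_Ropp; apply Rle_abs).
  generalize (exp_pos y) (exp_pos (- y)). intros. unfold Rabs at 1. destruct Rcase_abs; lra.
Qed.

Section Rec.
Variables (nu nu0 nu2 x l1 l2 : R).
Hypothesis Hx : 0 < x.
Hypothesis H0 : nu0 = nu - 1.
Hypothesis H2 : nu2 = nu + 1.
Hypothesis I1 : improper_integral_0_inf (bi nu0 x) l1.
Hypothesis I2 : improper_integral_0_inf (bi nu x) l2.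

Let Hh t := - 2 * exp (- x * cosh t) * sinh (nu * t) / x.
Let dHh t := bi nu2 x t - bi nu0 x t - 2 * nu / x * bi nu x t.

Lemma Hh_deriv t : is_derive Hh t (dHh t).
Proof.
  unfold Hh, dHh, bi. rewrite H0, H2.
  assert (E : cosh ((nu + 1) * t) - cosh ((nu - 1) * t) = 2 * sinh (nu * t) * sinh t).
  { rewrite <- cosh_diff. f_equal; f_equal; ring. }
  apply (is_derive_eq _ _ (exp (- x * cosh t) * (cosh ((nu + 1) * t) - cosh ((nu - 1) * t)) - 2 * nu / x * (exp (- x * cosh t) * cosh (nu * t)))).
  ring.
  rewrite E. unfold cosh, sinh. auto_derive. auto. toR. unfold Rdiv. field. lra.
Qed.

Lemma dHh_cont t : continuous dHh t.
Proof. apply cder. unfold dHh, bi, cosh. auto_derive. auto. Qed.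

Lemma Hh_lim : limpi Hh 0.
Proof.
  intros eps He.
  destruct (exp_small 1 (2 / x) eps) as [M HM]. lra. apply Rlt_le, Rdiv_lt_0_compat; lra. auto.
  exists (Rmax (Rabs M) (8 * (Rabs nu + 1) / x)). intros b Hb.
  assert (hb1 : Rabs M <= b) by (eapply Rle_trans; [apply Rmax_l|exact Hb]).
  assert (hb2 : 8 * (Rabs nu + 1) / x <= b) by (eapply Rle_trans; [apply Rmax_r|exact Hb]).
  assert (hb0 : 0 <= b) by (generalize (Rabs_pos M); lra).
  unfold Hh. rewrite Rminus_0_r.
  assert (Hc : (Rabs nu + 1) * b <= x * cosh b).
  { generalize (cosh_lower b hb0). intros.
    assert (8 * (Rabs nu + 1) <= x * b).
    { apply Rmult_le_reg_r with (/ x). apply Rinv_0_lt_compat; lra.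
      replace (x * b * / x) with b by (field; lra). exact hb2. }
    assert (x * (b ^ 2 / 8) <= x * cosh b) by (apply Rmult_le_compat_l; lra).
    generalize (Rabs_pos nu). nra. }
  assert (Hs : Rabs (sinh (nu * b)) <= exp (Rabs nu * b)).
  { eapply Rle_trans. apply sinh_abs. apply exp_mono. rewrite Rabs_mult, (Rabs_pos_eq b); lra. }
  replace (- 2 * exp (- x * cosh b) * sinh (nu * b) / x) with (- (2 / x) * (exp (- x * cosh b) * sinh (nu * b))) by (field; lra).
  rewrite Rabs_mult, Rabs_Ropp, Rabs_mult, (Rabs_pos_eq (2 / x)) by (apply Rlt_le, Rdiv_lt_0_compat; lra).
  rewrite (Rabs_pos_eq (exp _)) by (apply Rlt_le, exp_pos).
  apply Rle_lt_trans with (2 / x * exp (1 * - b)).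
  { apply Rmult_le_compat_l. apply Rlt_le, Rdiv_lt_0_compat; lra.
    apply Rle_trans with (exp (- x * cosh b) * exp (Rabs nu * b)).
    apply Rmult_le_compat_l. apply Rlt_le, exp_pos. auto.
    rewrite <- exp_plus. apply exp_mono. lra. }
  rewrite Rmult_comm. apply HM. generalize (Rle_abs M). lra.
Qed.

Lemma Hh_0 : Hh 0 = 0.
Proof. unfold Hh. rewrite Rmult_0_r. unfold sinh. rewrite Ropp_0, Rminus_diag. field. lra. Qed.

Lemma bessel_rec : improper_integral_0_inf (bi nu2 x) (l1 + 2 * nu / x * l2).
Proof.
  apply RInt_of_improper_0 in I1. apply RInt_of_improper_0 in I2.
  destruct I1 as [_ D1']. destruct I2 as [_ D2'].
  apply improper_0_of_RInt.
  - intros; apply ex_bi.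
  - replace (l1 + 2 * nu / x * l2) with (l1 + 2 * nu / x * l2 + (0 - Hh 0)) by (rewrite Hh_0; ring).
    apply (DL_ext _ (fun a b => RInt (bi nu0 x) a b + 2 * nu / x * RInt (bi nu x) a b + (Hh b - Hh a))).
    2: { apply DL_comb; auto. apply (DL_of_anti _ Hh); auto. apply lim0p_cont. apply cder. eexists; apply Hh_deriv. apply Hh_lim. }
    intros a b _ _.
    assert (E : RInt dHh a b = Hh b - Hh a) by (apply RInt_anti; [apply Hh_deriv|apply dHh_cont]).
    rewrite <- E.
    apply is_RInt_unique.
    apply (is_RInt_ext (fun t => plus (plus (bi nu0 x t) (scal (2 * nu / x) (bi nu x t))) (dHh t))).
    { intros t _. unfold dHh. change (plus (plus (bi nu0 x t) (scal (2 * nu / x) (bi nu x t))) (bi nu2 x t - bi nu0 x t - 2 * nu / x * bi nu x t)) with ((bi nu0 x t + (2 * nu / x) * (bi nu x t)) + (bi nu2 x t - bi nu0 x t - 2 * nu / x * bi nu x t)).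
      toR. ring. }
    apply (is_RInt_plus (V:=R_NormedModule)).
    apply (is_RInt_plus (V:=R_NormedModule)).
    + apply (RInt_correct (V:=R_CompleteNormedModule)). apply ex_bi.
    + apply (is_RInt_scal (V:=R_NormedModule)). apply (RInt_correct (V:=R_CompleteNormedModule)). apply ex_bi.
    + apply (RInt_correct (V:=R_CompleteNormedModule)). apply (@ex_RInt_continuous R_CompleteNormedModule). intros. apply dHh_cont.
Qed.

End Rec.

Definition kval n x := sqrt (PI / (2 * x)) * phi n x / x ^ n.

Lemma bessel_closed n x : 0 < x -> improper_integral_0_inf (bi (INR n + / 2) x) (kval n x).
Proof.
  intros Hx.
  assert (Hb1 : forall nu, (forall t, cosh (nu * t) = cosh (t / 2)) -> improper_integral_0_inf (bi nu x) (sqrt (PI / (2 * x)) * exp (- x))).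
  { intros nu Hnu. apply (bessel_base nu x Hx Hnu). }
  assert (K0 : kval 0 x = sqrt (PI / (2 * x)) * exp (- x)) by (unfold kval; simpl; field).
  revert n.
  assert (H : forall n, improper_integral_0_inf (bi (INR n + / 2) x) (kval n x) /\ improper_integral_0_inf (bi (INR (S n) + / 2) x) (kval (S n) x)).
  { intro n; induction n as [|n [IH1 IH2]].
    - split.
      + rewrite K0. apply Hb1. intros t. f_equal. simpl. field.
      + replace (kval 1 x) with (sqrt (PI / (2 * x)) * exp (- x) + 2 * (/ 2) / x * (sqrt (PI / (2 * x)) * exp (- x))).
        * apply (bessel_rec (/ 2) (- / 2) (INR 1 + / 2)); auto. simpl; field. simpl; field.
          apply Hb1. intros t. unfold cosh. replace (- / 2 * t) with (- (t / 2)) by field. rewrite Ropp_involutive. field.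
          apply Hb1. intros t. f_equal. field.
        * unfold kval. simpl. field. lra.
    - split; auto.
      replace (kval (S (S n)) x) with (kval n x + 2 * (INR (S n) + / 2) / x * kval (S n) x).
      + apply (bessel_rec (INR (S n) + / 2) (INR n + / 2) (INR (S (S n)) + / 2)); auto.
        rewrite S_INR; ring. rewrite S_INR; ring.
      + unfold kval. rewrite phi_SS. rewrite !S_INR. simpl pow.
        assert (x ^ n <> 0) by (apply pow_nonzero; lra). field. split; lra. }
  intros n; apply H.
Qed.

Lemma BesselK_closed n x : 0 < x -> BesselK (INR n + / 2) x = kval n x.
Proof. intros. unfold BesselK. apply Int_0_inf_unique. apply (bessel_closed n x H). Qed.

Definition gi (s t : R) := Rpower t (s - 1) * exp (- t).

Lemma Rpower_pos x y : 0 < Rpower x y.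
Proof. unfold Rpower. apply exp_pos. Qed.

Lemma gi_pos s t : 0 < gi s t.
Proof. unfold gi. apply Rmult_lt_0_compat. apply Rpower_pos. apply exp_pos. Qed.

Lemma Rpower_deriv t y : 0 < t -> is_derive (fun u => Rpower u y) t (y * Rpower t (y - 1)).
Proof. intros. apply is_derive_Reals. apply derivable_pt_lim_power. auto. Qed.

Lemma gi_cont s t : 0 < t -> continuous (gi s) t.
Proof.
  intros Ht. unfold gi. apply (cmul (fun u => Rpower u (s - 1)) (fun u => exp (- u))).
  apply cder. eexists. apply Rpower_deriv; auto.
  apply cder. auto_derive. auto.
Qed.

Lemma ex_gi s a b : 0 < a -> a <= b -> ex_RInt (gi s) a b.
Proof.
  intros. apply (@ex_RInt_continuous R_CompleteNormedModule). intros z Hz.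
  rewrite Rmin_left in Hz by lra. apply gi_cont. lra.
Qed.

Lemma ln_le_m1 y : 0 < y -> ln y <= y - 1.
Proof. intros. generalize (exp_ineq1_le (ln y)). rewrite exp_ln by auto. lra. Qed.

Definition Ks (s : R) := exp (s * ln (2 * s) - s).

Lemma Rpower_bound s t : 0 < s -> 0 < t -> Rpower t s <= Ks s * exp (t / 2).
Proof.
  intros Hs Ht. unfold Rpower, Ks. rewrite <- exp_plus. apply exp_mono.
  assert (ln (t / (2 * s)) <= t / (2 * s) - 1) by (apply ln_le_m1; apply Rdiv_lt_0_compat; lra).
  rewrite ln_div in H by lra.
  assert (s * (ln t - ln (2 * s)) <= s * (t / (2 * s) - 1)) by (apply Rmult_le_compat_l; lra).
  replace (s * (t / (2 * s) - 1)) with (t / 2 - s) in H0 by (field; lra).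
  replace (ln t * s) with (s * ln t) by ring. lra.
Qed.

Lemma Ks_pos s : 0 < Ks s.
Proof. apply exp_pos. Qed.

Section GRec.
Variable s : R.
Hypothesis Hs : 0 < s.

Let P t := - Rpower t s * exp (- t).
Let dP t := gi (s + 1) t - s * gi s t.

Lemma P_deriv t : 0 < t -> is_derive P t (dP t).
Proof.
  intros Ht. unfold P, dP, gi. replace (s + 1 - 1) with s by ring.
  apply (is_derive_eq _ _ (- (s * Rpower t (s - 1)) * exp (- t) + - Rpower t s * (- exp (- t)))). ring.
  apply (dmul (fun u => - Rpower u s) (fun u => exp (- u))).
  - apply (dext (fun u => - 1 * Rpower u s)). intros; ring.
    apply (is_derive_eq _ _ (- 1 * (s * Rpower t (s - 1)))). ring. apply is_derive_scal. apply Rpower_deriv; auto.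
  - auto_derive; auto. ring.
Qed.

Lemma dP_cont t : 0 < t -> continuous dP t.
Proof.
  intros Ht. unfold dP. apply (continuous_minus (gi (s + 1)) (fun u => s * gi s u)). apply gi_cont; auto.
  apply (cmul (fun _ => s) (gi s)). apply cconst. apply gi_cont; auto.
Qed.

Lemma RInt_dP a b : 0 < a -> a <= b -> RInt dP a b = P b - P a.
Proof.
  intros. apply (is_RInt_of_deriv P dP dP); intros; rewrite Rmin_left, Rmax_right in * by lra.
  apply P_deriv; lra. apply dP_cont; lra. auto.
Qed.

Lemma RInt_gi_rec a b : 0 < a -> a <= b -> RInt (gi (s + 1)) a b = s * RInt (gi s) a b + (P b - P a).
Proof.
  intros Ha Hab. rewrite <- RInt_dP by auto.
  apply is_RInt_unique.
  apply (is_RInt_ext (fun t => plus (scal s (gi s t)) (dP t))).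
  { intros t _. unfold dP. change (plus (scal s (gi s t)) (gi (s + 1) t - s * gi s t)) with (s * gi s t + (gi (s + 1) t - s * gi s t)). toR. ring. }
  apply (is_RInt_plus (V:=R_NormedModule)).
  + apply (is_RInt_scal (V:=R_NormedModule)). apply (RInt_correct (V:=R_CompleteNormedModule)). apply ex_gi; auto.
  + apply (RInt_correct (V:=R_CompleteNormedModule)). apply (@ex_RInt_continuous R_CompleteNormedModule). intros z Hz.
    rewrite Rmin_left in Hz by lra. apply dP_cont. lra.
Qed.

Lemma P_bound t : 0 < t -> Rabs (P t) <= Ks s * exp (- (t / 2)).
Proof.
  intros Ht. unfold P. rewrite Rabs_mult, Rabs_Ropp, !Rabs_pos_eq by (apply Rlt_le; try apply Rpower_pos; apply exp_pos).
  apply Rle_trans with (Ks s * exp (t / 2) * exp (- t)).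
  apply Rmult_le_compat_r. apply Rlt_le, exp_pos. apply Rpower_bound; auto.
  rewrite Rmult_assoc, <- exp_plus. right. f_equal. f_equal. field.
Qed.

Lemma P_lim0 : lim0p P 0.
Proof.
  intros eps He. exists (Rpower (eps / 2) (/ s)). split. apply Rpower_pos.
  intros a [Ha Had]. rewrite Rminus_0_r. unfold P.
  rewrite Rabs_mult, Rabs_Ropp, !Rabs_pos_eq by (apply Rlt_le; try apply Rpower_pos; apply exp_pos).
  assert (Rpower a s < eps / 2).
  { replace (eps / 2) with (Rpower (Rpower (eps / 2) (/ s)) s).
    apply Rlt_Rpower_l; auto. rewrite Rpower_mult. replace (/ s * s) with 1 by (field; lra). apply Rpower_1; lra. }
  assert (exp (- a) <= 1) by (rewrite <- exp_0; apply exp_mono; lra).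
  generalize (Rpower_pos a s). nra.
Qed.

Lemma P_limpi : limpi P 0.
Proof.
  intros eps He. destruct (exp_small (/ 2) (Ks s) eps) as [M HM]. lra. apply Rlt_le, Ks_pos. auto.
  exists (Rmax (Rabs M) 1). intros b Hb.
  assert (hb1 : Rabs M <= b) by (eapply Rle_trans; [apply Rmax_l|exact Hb]).
  assert (hb2 : 1 <= b) by (eapply Rle_trans; [apply Rmax_r|exact Hb]).
  rewrite Rminus_0_r. eapply Rle_lt_trans. apply P_bound. lra.
  replace (- (b / 2)) with (/ 2 * - b) by field. rewrite Rmult_comm. apply HM. generalize (Rle_abs M); lra.
Qed.

End GRec.

Lemma gamma_rec s l : 0 < s -> improper_integral_0_inf (gi s) l -> improper_integral_0_inf (gi (s + 1)) (s * l).
Proof.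
  intros Hs Hl. apply RInt_of_improper_0 in Hl. destruct Hl as [_ Hl].
  apply improper_0_of_RInt.
  - intros; apply ex_gi; auto.
  - set (P := fun t => - Rpower t s * exp (- t)).
    replace (s * l) with (0 + s * l + (0 - 0)) by ring.
    apply (DL_ext _ (fun a b => 0 + s * RInt (gi s) a b + (P b - P a))).
    { intros a b Ha Hab. rewrite RInt_gi_rec by auto. unfold P. ring. }
    apply DL_comb.
    + intros eps He. exists 1. split. lra. exists 0. intros. rewrite Rminus_diag, Rabs_R0. auto.
    + auto.
    + apply (DL_of_anti _ P); auto. apply (P_lim0 s Hs). apply (P_limpi s Hs).
Qed.

Lemma RInt_gi_mono s a b a' b' : 0 < a' -> a' <= a -> a <= b -> b <= b' -> RInt (gi s) a b <= RInt (gi s) a' b'.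
Proof.
  intros. rewrite <- (RInt_Chasles (gi s) a' a b') by (apply ex_gi; lra).
  rewrite <- (RInt_Chasles (gi s) a b b') by (apply ex_gi; lra).
  change (plus (RInt (gi s) a' a) (plus (RInt (gi s) a b) (RInt (gi s) b b'))) with (RInt (gi s) a' a + (RInt (gi s) a b + RInt (gi s) b b')).
  assert (0 <= RInt (gi s) a' a) by (apply RInt_ge_0; auto; [apply ex_gi; lra| intros; apply Rlt_le, gi_pos]).
  assert (0 <= RInt (gi s) b b') by (apply RInt_ge_0; auto; [apply ex_gi; lra| intros; apply Rlt_le, gi_pos]).
  lra.
Qed.

Lemma RInt_gi_bound s a b : 0 < s -> 0 < a -> a <= b -> RInt (gi s) a b <= 3 * Ks s / s.
Proof.
  intros Hs Ha Hab.
  assert (E := RInt_gi_rec s a b Ha Hab).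
  assert (B1 : RInt (gi (s + 1)) a b <= 2 * Ks s).
  { apply Rle_trans with (RInt (fun t => Ks s * exp (- (t / 2))) a b).
    - apply RInt_le; auto. apply ex_gi; auto.
      apply (@ex_RInt_continuous R_CompleteNormedModule). intros. apply cder. auto_derive. auto.
      intros t Ht. unfold gi. replace (s + 1 - 1) with s by ring.
      apply Rle_trans with (Ks s * exp (t / 2) * exp (- t)).
      apply Rmult_le_compat_r. apply Rlt_le, exp_pos. apply Rpower_bound; lra.
      rewrite Rmult_assoc, <- exp_plus. right. f_equal. f_equal. field.
    - rewrite (RInt_anti (fun t => - 2 * Ks s * exp (- (t / 2)))).
      + generalize (exp_pos (- (b / 2))) (Ks_pos s). intros.
        assert (exp (- (a / 2)) <= 1) by (rewrite <- exp_0; apply exp_mono; lra). nra.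
      + intros t. auto_derive; auto. toR. unfold Rdiv. field.
      + intros. apply cder. auto_derive. auto. }
  assert (B2 : Rpower b s * exp (- b) <= Ks s).
  { apply Rle_trans with (Ks s * exp (b / 2) * exp (- b)).
    apply Rmult_le_compat_r. apply Rlt_le, exp_pos. apply Rpower_bound; lra.
    rewrite Rmult_assoc, <- exp_plus.
    assert (exp (b / 2 + - b) <= 1) by (rewrite <- exp_0; apply exp_mono; lra).
    generalize (Ks_pos s); nra. }
  assert (B3 : 0 <= Rpower a s * exp (- a)) by (apply Rlt_le, Rmult_lt_0_compat; [apply Rpower_pos|apply exp_pos]).
  assert (s * RInt (gi s) a b <= 3 * Ks s) by lra.
  apply Rmult_le_reg_l with s. auto. replace (s * (3 * Ks s / s)) with (3 * Ks s) by (field; lra). auto.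
Qed.

Lemma gamma_exists s : 0 < s -> exists l, 0 < l /\ improper_integral_0_inf (gi s) l.
Proof.
  intros Hs.
  set (E := fun y => exists a b, 0 < a /\ a <= b /\ y = RInt (gi s) a b).
  assert (Hb : bound E).
  { exists (3 * Ks s / s). intros y [a [b [Ha [Hab ->]]]]. apply RInt_gi_bound; auto. }
  assert (He : exists y, E y) by (exists (RInt (gi s) 1 2); exists 1, 2; repeat split; lra).
  destruct (completeness E Hb He) as [l [Hub Hlub]].
  assert (Hpos : 0 < RInt (gi s) 1 2).
  { apply RInt_gt_0. lra. intros; apply gi_pos. intros; apply gi_cont; lra. }
  exists l. split.
  { apply Rlt_le_trans with (RInt (gi s) 1 2); auto. apply Hub. exists 1, 2; repeat split; lra. }
  apply improper_0_of_RInt.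
  - intros; apply ex_gi; auto.
  - intros eps Heps.
    destruct (classic (exists y, E y /\ l - eps < y)) as [[y [[a0 [b0 [Ha0 [Hab0 ->]]]] Hy]]|Hn].
    + exists a0. split; auto. exists b0. intros a b Ha Hab Had Hbm.
      assert (RInt (gi s) a0 b0 <= RInt (gi s) a b) by (apply RInt_gi_mono; lra).
      assert (RInt (gi s) a b <= l) by (apply Hub; exists a, b; repeat split; lra).
      rewrite Rabs_left1 by lra. lra.
    + exfalso. assert (l <= l - eps); [|lra]. apply Hlub. intros y Hy.
      destruct (Rle_dec y (l - eps)); auto. exfalso. apply Hn. exists y. split; auto. lra.
Qed.

Lemma gamma_one : improper_integral_0_inf (gi 1) 1.
Proof.
  assert (Eg : forall t, gi 1 t = exp (- t)).
  { intros t. unfold gi, Rpower. replace (1 - 1) with 0 by ring. rewrite Rmult_0_l, exp_0. ring. }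
  apply improper_0_of_RInt.
  - intros; apply ex_gi; auto.
  - assert (HD : DL (RInt (gi 1)) (0 - (- exp (- 0)))); [|rewrite Ropp_0, exp_0 in HD; rewrite Rminus_0_l, Ropp_involutive in HD; exact HD].
    apply (DL_of_anti _ (fun t => - exp (- t))).
    + intros a b _ _. apply (RInt_anti (fun t => - exp (- t)) (gi 1)).
      intros t. rewrite Eg. auto_derive; auto. ring.
      intros t. apply (continuous_ext (fun t => exp (- t))). intros; rewrite Eg; auto. apply cder. auto_derive; auto.
    + apply (lim0p_cont (fun t => - exp (- t))). apply cder. auto_derive. auto.
    + intros eps He. destruct (exp_small 1 1 eps) as [M HM]; try lra.
      exists (Rabs M). intros b Hb. rewrite Rminus_0_r, Rabs_Ropp, Rabs_pos_eq by (apply Rlt_le, exp_pos).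
      specialize (HM (- b)). rewrite Rmult_1_l, Rmult_1_r in HM. apply HM. generalize (Rle_abs M); lra.
Qed.

Fixpoint poch (s : R) (n : nat) : R := match n with O => 1 | S k => poch s k * (s + INR k) end.

Lemma Gamma_eq s l : improper_integral_0_inf (gi s) l -> Gamma s = l.
Proof. intros. unfold Gamma. apply Int_0_inf_unique. exact H. Qed.

Lemma Gamma_poch s n : 0 < s -> Gamma (s + INR n) = Gamma s * poch s n /\ 0 < Gamma s.
Proof.
  intros Hs. destruct (gamma_exists s Hs) as [l [Hl HI]].
  rewrite (Gamma_eq s l HI). split; auto.
  assert (forall n, improper_integral_0_inf (gi (s + INR n)) (l * poch s n)).
  { intros k; induction k.
    - simpl. replace (s + 0) with s by ring. replace (l * 1) with l by ring. auto.
    - rewrite S_INR. replace (s + (INR k + 1)) with ((s + INR k) + 1) by ring. simpl poch.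
      replace (l * (poch s k * (s + INR k))) with ((s + INR k) * (l * poch s k)) by ring.
      apply gamma_rec; auto. generalize (pos_INR k); lra. }
  apply Gamma_eq. auto.
Qed.

Lemma Gamma_fact n : Gamma (INR (S n)) = INR (Factorial.fact n).
Proof.
  assert (forall k, improper_integral_0_inf (gi (1 + INR k)) (INR (Factorial.fact k))).
  { intros k; induction k.
    - simpl. replace (1 + 0) with 1 by ring. apply gamma_one.
    - rewrite S_INR. replace (1 + (INR k + 1)) with ((1 + INR k) + 1) by ring.
      replace (INR (Factorial.fact (S k))) with ((1 + INR k) * INR (Factorial.fact k)).
      apply gamma_rec; auto. generalize (pos_INR k); lra.
      rewrite fact_simpl, mult_INR, S_INR. ring. }
  rewrite S_INR. replace (INR n + 1) with (1 + INR n) by ring. apply Gamma_eq. auto.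
Qed.

Fixpoint ck (C a : R) (k : nat) : R :=
  match k with O => C | S j => ck C a j * C / (2 * PI) / (a * (INR j + 1)) end.

Lemma ck_closed C a k : 0 < a -> ck C a k = C * (C / (2 * PI * a)) ^ k / INR (Factorial.fact k).
Proof.
  intros Ha. generalize PI_RGT_0; intros HP.
  induction k.
  - simpl. field.
  - simpl ck. rewrite IHk. rewrite fact_simpl, mult_INR, S_INR. simpl pow.
    generalize (INR_fact_neq_0 k) (pos_INR k). intros. field. repeat split; lra.
Qed.

Lemma conv_pow_closed C a k : 0 < a -> forall xi,
  conv_pow (fun xi : R => C * exp (- a * Rabs xi)) (S k) xi = ck C a k * phi k (a * Rabs xi).
Proof.
  intros Ha. induction k; intros xi.
  - simpl. f_equal. f_equal. ring.
  - change (conv_pow (fun xi : R => C * exp (- a * Rabs xi)) (S (S k)) xi)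
      with (conv (conv_pow (fun xi : R => C * exp (- a * Rabs xi)) (S k)) (fun xi : R => C * exp (- a * Rabs xi)) xi).
    unfold conv.
    assert (E : (fun eta => conv_pow (fun xi : R => C * exp (- a * Rabs xi)) (S k) eta * (C * exp (- a * Rabs (xi - eta))))
               = (fun eta => (ck C a k * phi k (a * Rabs eta)) * (C * exp (- a * Rabs (xi - eta))))).
    { apply functional_extensionality. intros eta. rewrite IHk. reflexivity. }
    rewrite E. rewrite (Int_R_unique _ _ (conv_phi k a (ck C a k) C xi Ha)).
    simpl ck. generalize PI_RGT_0 (pos_INR k); intros. field. lra.
Qed.

Lemma poch_Pq x n : 2 ^ n * poch ((1 + x) / 2) n = Pq n x.
Proof.
  induction n. simpl. ring.
  simpl poch. simpl Pq. rewrite <- IHn. simpl pow. field.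
Qed.

Theorem mainTheorem7 (C a : R) (hC : 0 <= C) (ha : 0 < a) (m : nat) (hm : (1 <= m)%nat) :
  let g := fun xi : R => C * exp (- a * Rabs xi) in
  (forall xi : R, xi <> 0 ->
     conv_pow g m xi =
       2 * sqrt (a * C) * Rpower (C * Rabs xi / (2 * PI)) (INR m - / 2)
         * BesselK (INR m - / 2) (a * Rabs xi) / Gamma (INR m)) /\
  (forall xi : R,
     conv_pow g m xi <=
       C * exp (- a * Rabs xi) * (C / (PI * a)) ^ (m - 1)
         * Gamma ((1 + a * Rabs xi) / 2 + INR m - 1)
         / (Gamma (INR m) * Gamma ((1 + a * Rabs xi) / 2))).
Proof.
  intros g. destruct m as [|n]; [lia|]. clear hm.
  generalize PI_RGT_0; intros HP.
  split.
  - intros xi Hxi. unfold g. rewrite conv_pow_closed by auto.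
    assert (Hax : 0 < a * Rabs xi) by (apply Rmult_lt_0_compat; auto; apply Rabs_pos_lt; auto).
    set (x := a * Rabs xi) in *.
    replace (INR (S n) - / 2) with (INR n + / 2) by (rewrite S_INR; field).
    rewrite BesselK_closed by auto. rewrite Gamma_fact. rewrite ck_closed by auto.
    generalize (INR_fact_neq_0 n); intros Hf.
    destruct (Req_dec C 0) as [->|HC0].
    + rewrite Rmult_0_r, sqrt_0. unfold Rdiv. ring.
    + assert (HC : 0 < C) by lra.
      set (y := C * Rabs xi / (2 * PI)).
      assert (Hy : 0 < y) by (unfold y; apply Rdiv_lt_0_compat; [apply Rmult_lt_0_compat; auto; apply Rabs_pos_lt; auto|lra]).
      rewrite Rpower_plus, Rpower_pow, Rpower_sqrt by auto.
      assert (Hyx : y = C / (2 * PI * a) * x) by (unfold y, x; field; lra). clearbody y.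
      assert (Hs : sqrt (a * C) * sqrt y * sqrt (PI / (2 * x)) = C / 2).
      { rewrite <- sqrt_mult, <- sqrt_mult.
        1: (replace (a * C * y * (PI / (2 * x))) with ((C / 2) ^ 2) by (rewrite Hyx; field; lra); apply sqrt_pow2; lra).
        all: first [apply Rlt_le, Rdiv_lt_0_compat; lra | solve [repeat apply Rmult_le_pos; lra]]. }
      unfold kval.
      assert (Hxn : x ^ n <> 0) by (apply pow_nonzero; lra).
      transitivity (2 * (sqrt (a * C) * sqrt y * sqrt (PI / (2 * x))) * (y ^ n / x ^ n) * phi n x / INR (Factorial.fact n)).
      2: { field. auto. }
      rewrite Hs. rewrite Hyx, Rpow_mult_distr. field. auto.
  - intros xi. unfold g. rewrite conv_pow_closed by auto.
    assert (Hx : 0 <= a * Rabs xi) by (apply Rmult_le_pos; [lra|apply Rabs_pos]).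
    set (x := a * Rabs xi) in *.
    replace ((1 + x) / 2 + INR (S n) - 1) with ((1 + x) / 2 + INR n) by (rewrite S_INR; ring).
    assert (Hs : 0 < (1 + x) / 2) by lra.
    destruct (Gamma_poch ((1 + x) / 2) n Hs) as [EG HG]. rewrite EG.
    rewrite Gamma_fact. rewrite ck_closed by auto.
    replace (S n - 1)%nat with n by lia.
    generalize (INR_fact_neq_0 n) (pos_INR (Factorial.fact n)); intros Hf Hf'.
    assert (Hco : 0 <= C * (C / (2 * PI * a)) ^ n / INR (Factorial.fact n)).
    { apply Rmult_le_pos. apply Rmult_le_pos; auto. apply pow_le. apply Rmult_le_pos; auto. apply Rlt_le, Rinv_0_lt_compat. nra.
      apply Rlt_le, Rinv_0_lt_compat. lra. }
    apply Rle_trans with (C * (C / (2 * PI * a)) ^ n / INR (Factorial.fact n) * (exp (- x) * Pq n x)).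
    { apply Rmult_le_compat_l; auto. apply phi_le_Pq; auto. }
    right. rewrite <- poch_Pq.
    replace (C / (PI * a)) with (C / (2 * PI * a) * 2) by (field; lra).
    rewrite Rpow_mult_distr. replace (- a * Rabs xi) with (- x) by (unfold x; ring).
    field. lra.
Qed.
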